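(* For all closed terms $t_0,t_0'$, if $t_0\to t_0'$ then $t_0\approx_{\emptyset}t_0'$.
   Context: Terms of $\lambda_S$: $t ::= x \mid \lambda x.t \mid t\,t \mid \mathcal{S}k.t \mid \langle t\rangle$ (shift binds $k$; $\langle\cdot\rangle$ reset), up to $\alpha$-conversion. Values $v::=\lambda x.t$. Pure contexts $E ::= \Box \mid v\,E \mid E\,t$; evaluation contexts $F ::= \Box \mid v\,F \mid F\,t \mid \langle F\rangle$. Reduction: $F[(\lambda x.t)v]\to F[t\{v/x\}]$; $F[\langle E[\mathcal Sk.t]\rangle]\to F[\langle t\{\lambda x.\langle E[x]\rangle/k\}\rangle]$ ($x\notin\mathrm{fv}(E)$); $F[\langle v\rangle]\to F[v]$; $\to^*$ reflexive-transitive closure. Stuck: not a value and irreducible; normal form: value or stuck. Closures: for $R$ a relation on closed terms, $\widetilde R$ is the smallest relation containing $R$, all $(x,x)$, closed under all term constructors, restricted to closed terms; $\widehat R$ is the smallest relation on closed evaluation contexts with $\Box\widehat R\Box$, $v_0F_0\widehat Rv_1F_1$ if $F_0\widehat RF_1,v_0\widetilde Rv_1$; $F_0t_0\widehat RF_1t_1$ if $F_0\widehat RF_1,t_0\widetilde Rt_1$; $\langle F_0\rangle\widehat R\langle F_1\rangle$ if $F_0\widehat RF_1$. An environment $\mathcal E$ is a relation on closed normal forms relating values only with values and stuck terms only with stuck terms; an environmental relation $\mathcal X$ is a set of environments and triples $(\mathcal E,t_0,t_1)$ with $t_0,t_1$ closed, written $t_0\mathcal X_{\mathcal E}t_1$.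 $\mathcal X$ is an environmental bisimulation if (1) whenever $t_0\mathcal X_{\mathcal E}t_1$: (a) $t_0\to t_0'$ implies $t_1\to^*t_1'$ with $t_0'\mathcal X_{\mathcal E}t_1'$; (b) if $t_0$ is a value $v_0$ then $t_1\to^*v_1$ with $\mathcal E\cup\{(v_0,v_1)\}\in\mathcal X$; (c) if $t_0$ is stuck then $t_1\to^*t_1'$ stuck with $\mathcal E\cup\{(t_0,t_1')\}\in\mathcal X$; (d) symmetric conditions; (2) whenever $\mathcal E\in\mathcal X$: (a) $(\lambda x.t_0)\mathcal E(\lambda x.t_1)$, $v_0\widetilde{\mathcal E}v_1$ imply $t_0\{v_0/x\}\mathcal X_{\mathcal E}t_1\{v_1/x\}$; (b) $E_0[\mathcal Sk.t_0]\mathcal EE_1[\mathcal Sk.t_1]$, pure $E_0'\widehat{\mathcal E}E_1'$ imply $\langle t_0\{\lambda x.\langle E_0'[E_0[x]]\rangle/k\}\rangle\mathcal X_{\mathcal E}\langle t_1\{\lambda x.\langle E_1'[E_1[x]]\rangle/k\}\rangle$ ($x$ fresh). $\approx$ is the largest environmental bisimulation; $t_0\approx_{\emptyset}t_1$ means $(\emptyset,t_0,t_1)\in\approx$. *)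

(* Defs.v *)
From Stdlib Require Import Arith Relations.

(** Terms: de Bruijn indices (alpha-conversion is built in).
    [Lam t] binds index 0 in t; [Shift t] binds k as index 0 in t. *)
Inductive term : Type :=
| Var (n : nat)
| Lam (t : term)
| App (t u : term)
| Shift (t : term)
| Reset (t : term).

Fixpoint lift (k : nat) (t : term) : term :=
  match t with
  | Var n => if Nat.ltb n k then Var n else Var (S n)
  | Lam b => Lam (lift (S k) b)
  | App a b => App (lift k a) (lift k b)
  | Shift b => Shift (lift (S k) b)
  | Reset b => Reset (lift k b)
  end.

(** [subst k v t]: substitute v for index k in t (v given at depth k),
    decrementing indices above k.  t{v/x} for the binder x is [subst 0 v t]. *)
Fixpoint subst (k : nat) (v : term) (t : term) : term :=
  match t with
  | Var n => if Nat.ltb n k then Var n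
             else if Nat.eqb n k then v else Var (pred n)
  | Lam b => Lam (subst (S k) (lift 0 v) b)
  | App a b => App (subst k v a) (subst k v b)
  | Shift b => Shift (subst (S k) (lift 0 v) b)
  | Reset b => Reset (subst k v b)
  end.

Fixpoint wf (n : nat) (t : term) : Prop :=
  match t with
  | Var m => m < n
  | Lam b => wf (S n) b
  | App a b => wf n a /\ wf n b
  | Shift b => wf (S n) b
  | Reset b => wf n b
  end.

Definition closed (t : term) : Prop := wf 0 t.

Definition is_value (t : term) : Prop := exists b, t = Lam b.

(** Evaluation contexts F ::= [] | v F | F t | <F>;  [CAppR b F] is (Lam b) F.
    Pure contexts E are those with no [CReset]. *)
Inductive ctx : Type :=
| Hole
| CAppR (b : term) (F : ctx)
| CAppL (F : ctx) (t : term)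
| CReset (F : ctx).

Fixpoint plug (F : ctx) (t : term) : term :=
  match F with
  | Hole => t
  | CAppR b F' => App (Lam b) (plug F' t)
  | CAppL F' u => App (plug F' t) u
  | CReset F' => Reset (plug F' t)
  end.

Fixpoint pure (F : ctx) : Prop :=
  match F with
  | Hole => True
  | CAppR _ F' => pure F'
  | CAppL F' _ => pure F'
  | CReset _ => False
  end.

Fixpoint liftc (k : nat) (F : ctx) : ctx :=
  match F with
  | Hole => Hole
  | CAppR b F' => CAppR (lift (S k) b) (liftc k F')
  | CAppL F' u => CAppL (liftc k F') (lift k u)
  | CReset F' => CReset (liftc k F')
  end.

Inductive step : term -> term -> Prop :=
| step_beta : forall F t b,
    step (plug F (App (Lam t) (Lam b))) (plug F (subst 0 (Lam b) t))
| step_shift : forall F E t, pure E ->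
    step (plug F (Reset (plug E (Shift t))))
         (plug F (Reset (subst 0 (Lam (Reset (plug (liftc 0 E) (Var 0)))) t)))
| step_reset : forall F b,
    step (plug F (Reset (Lam b))) (plug F (Lam b)).

Definition steps : term -> term -> Prop := clos_refl_trans term step.

Definition stuck (t : term) : Prop := ~ is_value t /\ forall t', ~ step t t'.
Definition normal (t : term) : Prop := is_value t \/ stuck t.

Definition Relation := term -> term -> Prop.

Definition is_env (E : Relation) : Prop :=
  forall a b, E a b ->
    closed a /\ closed b /\ normal a /\ normal b /\
    ((is_value a /\ is_value b) \/ (stuck a /\ stuck b)).

Inductive tclo (R : Relation) : term -> term -> Prop :=
| tc_R : forall a b, R a b -> tclo R a b
| tc_var : forall n, tclo R (Var n) (Var n)
| tc_lam : forall a b, tclo R a b -> tclo R (Lam a) (Lam b)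
| tc_app : forall a a' b b', tclo R a b -> tclo R a' b' -> tclo R (App a a') (App b b')
| tc_shift : forall a b, tclo R a b -> tclo R (Shift a) (Shift b)
| tc_reset : forall a b, tclo R a b -> tclo R (Reset a) (Reset b).

Definition tilde (R : Relation) (a b : term) : Prop :=
  tclo R a b /\ closed a /\ closed b.

Inductive hat (R : Relation) : ctx -> ctx -> Prop :=
| hat_hole : hat R Hole Hole
| hat_appR : forall b0 b1 F0 F1,
    hat R F0 F1 -> tilde R (Lam b0) (Lam b1) -> hat R (CAppR b0 F0) (CAppR b1 F1)
| hat_appL : forall F0 F1 t0 t1,
    hat R F0 F1 -> tilde R t0 t1 -> hat R (CAppL F0 t0) (CAppL F1 t1)
| hat_reset : forall F0 F1, hat R F0 F1 -> hat R (CReset F0) (CReset F1).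

Record envrel : Type := {
  X_env : Relation -> Prop;
  X_tri : Relation -> term -> term -> Prop }.

Definition is_envrel (X : envrel) : Prop :=
  (forall E, X_env X E -> is_env E) /\
  (forall E t0 t1, X_tri X E t0 t1 -> is_env E /\ closed t0 /\ closed t1).

Definition ext (E : Relation) (a0 a1 : term) : Relation :=
  fun a b => E a b \/ (a = a0 /\ b = a1).

Definition env_bisim (X : envrel) : Prop :=
  is_envrel X /\
  (forall E t0 t1, X_tri X E t0 t1 ->
     (forall t0', step t0 t0' -> exists t1', steps t1 t1' /\ X_tri X E t0' t1') /\
     (is_value t0 -> exists v1, steps t1 v1 /\ is_value v1 /\ X_env X (ext E t0 v1)) /\
     (stuck t0 -> exists t1', steps t1 t1' /\ stuck t1' /\ X_env X (ext E t0 t1')) /\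
     (forall t1', step t1 t1' -> exists t0', steps t0 t0' /\ X_tri X E t0' t1') /\
     (is_value t1 -> exists v0, steps t0 v0 /\ is_value v0 /\ X_env X (ext E v0 t1)) /\
     (stuck t1 -> exists t0', steps t0 t0' /\ stuck t0' /\ X_env X (ext E t0' t1))) /\
  (forall E, X_env X E ->
     (forall b0 b1 v0 v1, E (Lam b0) (Lam b1) -> is_value v0 -> is_value v1 ->
        tilde E v0 v1 -> X_tri X E (subst 0 v0 b0) (subst 0 v1 b1)) /\
     (forall E0 E1 t0 t1 E0' E1',
        pure E0 -> pure E1 -> E (plug E0 (Shift t0)) (plug E1 (Shift t1)) ->
        pure E0' -> pure E1' -> hat E E0' E1' ->
        X_tri X E
          (Reset (subst 0 (Lam (Reset (plug (liftc 0 E0') (plug (liftc 0 E0) (Var 0))))) t0))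
          (Reset (subst 0 (Lam (Reset (plug (liftc 0 E1') (plug (liftc 0 E1) (Var 0))))) t1)))).

Definition empty_rel : Relation := fun _ _ => False.

(** t0 \approx_\emptyset t1: (\emptyset, t0, t1) belongs to the largest
    environmental bisimulation (= the union of all of them). *)
Definition approx_empty (t0 t1 : term) : Prop :=
  exists X, env_bisim X /\ X_tri X empty_rel t0 t1.

(* Main.v *)
Require Import Defs.
From Stdlib Require Import Arith Relations Lia.

Fixpoint wfc (n : nat) (F : ctx) : Prop :=
  match F with
  | Hole => True
  | CAppR b F' => wf (S n) b /\ wfc n F'
  | CAppL F' u => wfc n F' /\ wf n u
  | CReset F' => wfc n F'
  end.

Lemma wf_plug : forall F n t, wf n (plug F t) <-> wfc n F /\ wf n t.
Proof. induction F; simpl; intros; try rewrite IHF; tauto. Qed.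

Lemma wf_lift : forall t n k, wf n t -> wf (S n) (lift k t).
Proof.
  induction t; simpl; intros; auto; try tauto.
  destruct (Nat.ltb n k); simpl; lia.
  destruct H; split; auto.
Qed.

Lemma wf_subst : forall t n k v, wf (S n) t -> wf n v -> k <= n -> wf n (subst k v t).
Proof.
  induction t; simpl; intros n0 k v H1 H2 H3.
  - destruct (Nat.ltb n k) eqn:E1; simpl. apply Nat.ltb_lt in E1; lia.
    destruct (Nat.eqb n k) eqn:E2; simpl; auto.
    apply Nat.ltb_ge in E1; apply Nat.eqb_neq in E2; lia.
  - apply IHt; auto. apply wf_lift; auto. lia.
  - destruct H1; split; auto.
  - apply IHt; auto. apply wf_lift; auto. lia.
  - auto.
Qed.

Lemma wfc_liftc : forall F n k, wfc n F -> wfc (S n) (liftc k F).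
Proof.
  induction F; simpl; intros; auto; try (destruct H; split; auto; apply wf_lift; auto).
Qed.

Lemma plug_not_lam : forall F r b, (forall b', r <> Lam b') -> plug F r <> Lam b.
Proof. destruct F; simpl; intros; try discriminate; auto. Qed.

Lemma plug_not_shift : forall F r t, (forall t', r <> Shift t') -> plug F r <> Shift t.
Proof. destruct F; simpl; intros; try discriminate; auto. Qed.

Definition rdx (r : term) : Prop :=
  (exists t b, r = App (Lam t) (Lam b)) \/
  (exists E t, pure E /\ r = Reset (plug E (Shift t))) \/
  (exists b, r = Reset (Lam b)).

Lemma rdx_not_lam : forall r b, rdx r -> r <> Lam b.
Proof. intros r b [[? [? ->]]|[[? [? [? ->]]]|[? ->]]]; discriminate. Qed.

Lemma rdx_not_shift : forall r b, rdx r -> r <> Shift b.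
Proof. intros r b [[? [? ->]]|[[? [? [? ->]]]|[? ->]]]; discriminate. Qed.

Lemma shift_no_rdx : forall E t F r, pure E -> rdx r -> plug E (Shift t) <> plug F r.
Proof.
  induction E; simpl; intros t0 F r Hp Hr Heq.
  - destruct F; simpl in Heq; try discriminate.
    subst. eapply rdx_not_shift; eauto.
  - destruct F; simpl in Heq.
    + subst. destruct Hr as [[? [? H]]|[[? [? [? H]]]|[? H]]]; inversion H; subst.
      eapply plug_not_lam; [|eauto]. intros; discriminate.
    + inversion Heq; subst. eapply IHE; eauto.
    + inversion Heq. eapply plug_not_lam; [|symmetry; eauto].
      intros; eapply rdx_not_lam; eauto.
    + discriminate.
  - destruct F; simpl in Heq.
    + subst. destruct Hr as [[? [? H]]|[[? [? [? H]]]|[? H]]]; inversion H; subst.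
      eapply plug_not_lam; [|eauto]. intros; discriminate.
    + inversion Heq. eapply plug_not_lam; [|eauto]. intros; discriminate.
    + inversion Heq; subst. eapply IHE; eauto.
    + discriminate.
  - destruct Hp.
Qed.

Lemma hole_only : forall F r r', rdx r -> rdx r' -> plug F r = r' -> F = Hole.
Proof.
  destruct F; simpl; intros r r' Hr Hr' Heq; auto; exfalso; subst r'.
  - destruct Hr' as [[? [? H]]|[[? [? [? H]]]|[? H]]]; subst; inversion H; subst.
    eapply plug_not_lam; [|eauto]. intros; eapply rdx_not_lam; eauto.
  - destruct Hr' as [[? [? H]]|[[? [? [? H]]]|[? H]]]; subst; inversion H; subst.
    eapply plug_not_lam; [|eauto]. intros; eapply rdx_not_lam; eauto.
  - destruct Hr' as [[? [? H]]|[[? [? [? H]]]|[? H]]]; subst; inversion H; subst.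
    + eapply shift_no_rdx; eauto.
    + eapply plug_not_lam; [|eauto]. intros; eapply rdx_not_lam; eauto.
Qed.

Lemma uniq_dec : forall F F' r r', rdx r -> rdx r' -> plug F r = plug F' r' ->
  F = F' /\ r = r'.
Proof.
  induction F; intros F' r r' Hr Hr' Heq.
  - simpl in Heq. symmetry in Heq. pose proof (hole_only _ _ _ Hr' Hr Heq). subst; auto.
  - destruct F'.
    + pose proof (hole_only _ _ _ Hr Hr' Heq) as H. discriminate.
    + simpl in Heq. inversion Heq; subst. destruct (IHF _ _ _ Hr Hr' H1); subst; auto.
    + simpl in Heq. inversion Heq. exfalso. eapply plug_not_lam; [|symmetry; eauto].
      intros; eapply rdx_not_lam; eauto.
    + discriminate.
  - destruct F'.
    + pose proof (hole_only _ _ _ Hr Hr' Heq) as H. discriminate.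
    + simpl in Heq. inversion Heq. exfalso. eapply plug_not_lam; [|eauto].
      intros; eapply rdx_not_lam; eauto.
    + simpl in Heq. inversion Heq; subst. destruct (IHF _ _ _ Hr Hr' H0); subst; auto.
    + discriminate.
  - destruct F'; try discriminate.
    + pose proof (hole_only _ _ _ Hr Hr' Heq) as H. discriminate.
    + simpl in Heq. inversion Heq; subst. destruct (IHF _ _ _ Hr Hr' H0); subst; auto.
Qed.

Lemma plug_shift_inj : forall E E' t t', plug E (Shift t) = plug E' (Shift t') ->
  E = E' /\ t = t'.
Proof.
  induction E; destruct E'; simpl; intros u0 u1 H; try discriminate.
  - inversion H; auto.
  - inversion H; subst. destruct (IHE _ _ _ H2); subst; auto.
  - inversion H. exfalso. eapply plug_not_lam; [|symmetry; eauto]. intros; discriminate.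
  - inversion H. exfalso. eapply plug_not_lam; [|eauto]. intros; discriminate.
  - inversion H; subst. destruct (IHE _ _ _ H1); subst; auto.
  - inversion H; subst. destruct (IHE _ _ _ H1); subst; auto.
Qed.

Lemma step_det : forall a a1 a2, step a a1 -> step a a2 -> a1 = a2.
Proof.
  intros a a1 a2 H1 H2.
  destruct H1; inversion H2; subst;
  match goal with
  | H : plug ?F ?r = plug ?F' ?r' |- _ =>
      let Hu := fresh in
      assert (Hu : F = F' /\ r = r') by
        (apply uniq_dec; auto; unfold rdx; eauto 10);
      destruct Hu as [? Hr]; subst; inversion Hr; subst
  end; auto.
  - match goal with Hx : plug _ (Shift _) = plug _ (Shift _) |- _ => destruct (plug_shift_inj _ _ _ _ Hx); subst; auto end.
  - exfalso. eapply plug_not_lam; [|eauto]. intros; discriminate.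
  - exfalso. eapply plug_not_lam; [|symmetry; eauto]. intros; discriminate.
Qed.

Lemma step_closed : forall a a', step a a' -> closed a -> closed a'.
Proof.
  unfold closed; intros a a' H Hc. destruct H.
  - apply wf_plug in Hc. apply wf_plug. simpl in Hc. destruct Hc as [? [? ?]].
    split; auto. apply wf_subst; auto.
  - apply wf_plug in Hc. apply wf_plug. simpl in Hc. destruct Hc as [? Hc].
    apply wf_plug in Hc. simpl in Hc. destruct Hc.
    split; auto. simpl. apply wf_subst; auto. simpl. apply wf_plug. split; simpl; auto.
    apply wfc_liftc; auto.
  - apply wf_plug in Hc. apply wf_plug. simpl in Hc. auto.
Qed.

Lemma steps_closed : forall a b, steps a b -> closed a -> closed b.
Proof. intros a b H; induction H; eauto using step_closed. Qed.

Lemma steps_det : forall a b a', steps a b -> step a a' -> a = b \/ steps a' b.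
Proof.
  intros a b a' H Hs. apply clos_rt_rt1n in H. destruct H; auto.
  right. rewrite (step_det _ _ _ Hs H). apply clos_rt1n_rt; auto.
Qed.

Lemma value_nostep : forall a a', is_value a -> ~ step a a'.
Proof.
  intros a a' [b ->] H. inversion H;
  (eapply plug_not_lam; [|eauto]; intros; discriminate).
Qed.

Lemma steps_nf : forall a b, steps a b -> (forall a', ~ step a a') -> a = b.
Proof.
  intros a b H Hn. apply clos_rt_rt1n in H. destruct H; auto. exfalso; eapply Hn; eauto.
Qed.

Definition Xenv (E : Relation) : Prop :=
  forall x y, E x y -> x = y /\ closed x /\ (is_value x \/ stuck x).

Definition Xtri (E : Relation) (a b : term) : Prop :=
  Xenv E /\ closed a /\ closed b /\ (steps a b \/ steps b a).

Definition XX : envrel := {| X_env := Xenv; X_tri := Xtri |}.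

Lemma Xenv_env : forall E, Xenv E -> is_env E.
Proof.
  intros E H a b Hab. destruct (H a b Hab) as [-> [Hc Hn]].
  unfold normal. destruct Hn; tauto.
Qed.

Lemma tclo_eq : forall E a b, Xenv E -> tclo E a b -> a = b.
Proof.
  intros E a b HE H; induction H; subst; auto.
  apply (HE _ _ H).
Qed.

Lemma hat_eq : forall E F0 F1, Xenv E -> hat E F0 F1 -> F0 = F1 /\ wfc 0 F0.
Proof.
  intros E F0 F1 HE H; induction H; simpl.
  - auto.
  - destruct IHhat; subst. destruct H0 as [Ht [Hc _]].
    apply tclo_eq in Ht; auto. inversion Ht; subst. auto.
  - destruct IHhat; subst. destruct H0 as [Ht [Hc _]].
    apply tclo_eq in Ht; auto. subst. auto.
  - destruct IHhat; subst; auto.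
Qed.

Lemma tri_step : forall E a b a', Xtri E a b -> step a a' ->
  exists b', steps b b' /\ Xtri E a' b'.
Proof.
  intros E a b a' [HE [Ha [Hb Hs]]] Hst. exists b. split. apply rt_refl.
  assert (Ha' : closed a') by (eapply step_closed; eauto).
  unfold Xtri; split; [auto|split; [auto|split; [auto|]]].
  destruct Hs as [Hs|Hs].
  - destruct (steps_det _ _ _ Hs Hst) as [->|?]; auto.
    right. apply rt_step; auto.
  - right. eapply rt_trans; eauto. apply rt_step; auto.
Qed.

Lemma tri_nf : forall E a b, Xtri E a b -> (forall a', ~ step a a') -> steps b a.
Proof.
  intros E a b [HE [Ha [Hb Hs]]] Hn. destruct Hs; auto.
  rewrite <- (steps_nf _ _ H Hn). apply rt_refl.
Qed.

Lemma tri_sym : forall E a b, Xtri E a b -> Xtri E b a.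
Proof. unfold Xtri; intros; tauto. Qed.

Lemma Xenv_ext : forall E a, Xenv E -> closed a -> (is_value a \/ stuck a) ->
  Xenv (ext E a a).
Proof.
  intros E a HE Hc Hn x y [H|[-> ->]]; auto.
Qed.

Lemma XX_bisim : env_bisim XX.
Proof.
  split; [|split].
  - split; simpl. apply Xenv_env.
    intros E t0 t1 [? [? [? ?]]]. split; auto. apply Xenv_env; auto.
  - simpl. intros E t0 t1 H.
    pose proof (tri_sym _ _ _ H) as H'.
    pose proof H as H0. destruct H0 as [HE [Ha [Hb _]]].
    repeat split.
    + intros t0' Hs0. exact (tri_step _ _ _ _ H Hs0).
    + intros Hv. exists t0. split; [|split; [auto|]].
      eapply tri_nf; [exact H|]. intros; apply value_nostep; auto.
      apply Xenv_ext; auto.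
    + intros Hst. exists t0. split; [|split; [auto|]].
      eapply tri_nf; [exact H|]. intros; apply Hst.
      apply Xenv_ext; auto.
    + intros t1' Hs. destruct (tri_step _ _ _ _ H' Hs) as [b' [? ?]].
      exists b'; split; auto. apply tri_sym; auto.
    + intros Hv. exists t1. split; [|split; [auto|]].
      eapply tri_nf; [exact H'|]. intros; apply value_nostep; auto.
      apply Xenv_ext; auto.
    + intros Hst. exists t1. split; [|split; [auto|]].
      eapply tri_nf; [exact H'|]. intros; apply Hst.
      apply Xenv_ext; auto.
  - simpl. intros E HE. split.
    + intros b0 b1 v0 v1 Hb Hv0 Hv1 Hvt.
      destruct (HE _ _ Hb) as [Heq [Hc _]]. inversion Heq; subst.
      destruct Hvt as [Ht [Hc0 _]]. apply tclo_eq in Ht; auto. subst.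
      assert (closed (subst 0 v1 b1)).
      { unfold closed in *. simpl in Hc. apply wf_subst; auto. }
      split; [exact HE|split; [auto|split; [auto|left; apply rt_refl]]].
    + intros E0 E1 t0 t1 E0' E1' Hp0 Hp1 HE01 Hp0' Hp1' Hh.
      destruct (HE _ _ HE01) as [Heq [Hc _]].
      destruct (plug_shift_inj _ _ _ _ Heq); subst.
      destruct (hat_eq _ _ _ HE Hh); subst.
      unfold closed in Hc. apply wf_plug in Hc. destruct Hc as [Hc1 Hc2]. simpl in Hc2.
      assert (closed (Reset (subst 0 (Lam (Reset (plug (liftc 0 E1')
                 (plug (liftc 0 E1) (Var 0))))) t1))).
      { unfold closed. simpl. apply wf_subst; auto. simpl.
        apply wf_plug. split. apply wfc_liftc; auto.
        apply wf_plug. split. apply wfc_liftc; auto. simpl; lia. }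
      split; [exact HE|split; [auto|split; [auto|left; apply rt_refl]]].
Qed.

Theorem lemma6 : forall t0 t0' : term,
  closed t0 -> closed t0' -> step t0 t0' -> approx_empty t0 t0'.
Proof.
  intros t0 t0' H0 H1 Hs. exists XX. split. apply XX_bisim.
  simpl. split; [intros x y []|split; [auto|split; [auto|left; apply rt_step; auto]]].
Qed.
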